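(* Let $\ell$ be a positive integer and let $(T^-,T^+)$ be an ordered pair of rooted plane trees with a total of $\ell-1$ edges. Number the levels of each tree so that its root is at level $1$. Call the non-root vertices at odd levels of $T^-$ and at even levels of $T^+$ ''low'', and the non-root vertices at even levels of $T^-$ and at odd levels of $T^+$ ''high''. Label the low vertices with $1,2,3,\dots$ consecutively, processing levels from the deepest upward and, within a level, from left to right; label the high vertices with $\ell,\ell-1,\ell-2,\dots$ consecutively in the same order (deepest level first, left to right within a level). Let $b\in[\ell]$ be the unique label not used, and label the roots of $T^-$ and $T^+$ by $b^-$ and $b^+$. Define $\mu:[\ell]\to[\ell]$ by $\mu(b)=b$ and, for $i\neq b$, $\mu(i)=$ the label of the parent of the vertex labelled $i$, where a parent labelled $b^\pm$ is read as $b$. Then $\mu$ is a partition (weakly decreasing) and $\mu\in\mathcal{P}^\ell(1)$.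
   Context: $[n]=\{1,\dots,n\}$. A rooted plane tree is a rooted tree in which the children of each vertex are linearly ordered (left to right). $\mathcal{P}^\ell$ denotes the set of partitions $(\mu_1\geq\dots\geq\mu_\ell>0)$ with exactly $\ell$ parts and $\mu_1\leq\ell$, regarded as weakly decreasing maps $[\ell]\to[\ell]$. $\tau_\ell:\mathcal{P}^\ell\to\mathcal{P}^\ell$ is $\tau_\ell(\mu_1,\dots,\mu_\ell)=(\ell+1-\mu_\ell,\dots,\ell+1-\mu_1)$. The sets $\mathcal{P}^\ell(1)\subseteq\mathcal{P}^\ell$ are defined inductively by $\mathcal{P}^1(1)=\{(1)\}$ and, for $\ell\geq2$, $\mathcal{P}^\ell(1)=D_\ell\cup\tau_\ell(D_\ell)$ where $D_\ell=\{\mu\in\mathcal{P}^\ell:(\mu_1,\dots,\mu_{\ell-1})\in\mathcal{P}^{\ell-1}(1)\}$. *)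

(* Defs.v *)
From mathcomp Require Import all_boot.
Set Implicit Arguments. Unset Strict Implicit. Unset Printing Implicit Defensive.

Inductive ptree : Type := Node of seq ptree.

Definition leaf : ptree := Node [::].

Fixpoint nverts (t : ptree) : nat :=
  let: Node ts := t in (sumn (map nverts ts)).+1.

Definition nedges (t : ptree) : nat := (nverts t).-1.

(* Vertices are identified by their path from the root (sequence of child
   indices). [level d t] = vertices at depth d (i.e. at level d+1, the root
   being at level 1), listed from left to right. *)
Fixpoint level (d : nat) (t : ptree) : seq (seq nat) :=
  match d, t with
  | 0, _ => [:: [::]]
  | d'.+1, Node ts =>
      flatten [seq map (cons i) (level d' (nth leaf ts i)) | i <- iota 0 (size ts)]
  end.

(* A vertex of the pair (T^-, T^+): false = T^-, true = T^+. *)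
Definition vtx := (bool * seq nat)%type.

Section Labelling.
Variables (l : nat) (Tm Tp : ptree).

(* bound on the depths occurring *)
Definition dbound : nat := nverts Tm + nverts Tp.

Definition depths_down : seq nat := rev (iota 1 dbound).

(* Low vertices: odd levels of T^- (even depth) and even levels of T^+ (odd
   depth); deepest level first, left to right within a level.  (At a given
   level low vertices come from only one of the two trees.) *)
Definition lowv : seq vtx :=
  flatten [seq (if odd d then [seq (true, p) | p <- level d Tp]
                else [seq (false, p) | p <- level d Tm]) | d <- depths_down].

(* High vertices: even levels of T^- (odd depth), odd levels of T^+ (even depth). *)
Definition highv : seq vtx :=
  flatten [seq (if odd d then [seq (false, p) | p <- level d Tm]
                else [seq (true, p) | p <- level d Tp]) | d <- depths_down].

(* the unused label: low labels are 1..#low, high labels are l, l-1, ... *)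
Definition blabel : nat := (size lowv).+1.

(* label of a vertex; the roots b^- and b^+ are read as b *)
Definition label (v : vtx) : nat :=
  if v \in lowv then (index v lowv).+1
  else if v \in highv then l - index v highv
  else blabel.

(* vertex carrying label i (i <> b) *)
Definition vertex_of (i : nat) : vtx :=
  if i <= size lowv then nth (false, [::]) lowv i.-1
  else nth (false, [::]) highv (l - i).

Definition parent (v : vtx) : vtx := (v.1, take (size v.2).-1 v.2).

Definition mu (i : nat) : nat :=
  if i == blabel then blabel else label (parent (vertex_of i)).

Definition mu_seq : seq nat := [seq mu i | i <- iota 1 l].

End Labelling.

(* P^l : partitions with exactly l parts and mu_1 <= l, as weakly decreasing
   sequences of length l with entries in [l]. *)
Definition inP (l : nat) (s : seq nat) : bool :=
  [&& size s == l, sorted geq s & all (fun x => 0 < x <= l) s].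

Definition tau (l : nat) (s : seq nat) : seq nat := rev [seq l.+1 - x | x <- s].

(* P^l(1), defined inductively; D_l = { mu in P^l | (mu_1..mu_{l-1}) in P^{l-1}(1) } *)
Fixpoint Pl1 (l : nat) (s : seq nat) : Prop :=
  match l with
  | 0 => False
  | l'.+1 =>
      if l' == 0 then s = [:: 1]
      else (inP l s /\ Pl1 l' (take l' s))
           \/ (exists nu, (inP l nu /\ Pl1 l' (take l' nu)) /\ s = tau l nu)
  end.

(* Main.v *)
Require Import Defs.
From mathcomp Require Import all_boot zify.

Lemma sorted_map_iota (f : nat -> nat) a n :
  (forall i j, a <= i -> i <= j -> j < a + n -> f j <= f i) ->
  sorted geq (map f (iota a n)).
Proof.
elim: n a => [|n IH] a H //=.
rewrite (path_sortedE (leT:=geq)); last by move=> x y z /= h1 h2; lia.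
apply/andP; split.
  apply/allP => x /mapP [j]; rewrite mem_iota => hj ->; apply: H; lia.
apply: IH => i j h1 h2 h3; apply: H; lia.
Qed.

Lemma tau_inP l s : inP l s -> inP l (tau l s).
Proof.
case/and3P => /eqP hs hso /allP hr.
apply/and3P; split.
- by rewrite /tau size_rev size_map hs.
- rewrite /tau rev_sorted.
  apply: (homo_sorted_in (P := fun x => 0 < x <= l) (e := geq)) => //.
  + move=> x y hx hy hxy; move: hx hy hxy; rewrite /in_mem /=. lia.
  + by apply/allP.
- apply/allP => x; rewrite /tau mem_rev => /mapP [y /hr hy ->]; lia.
Qed.

Lemma tauK l s : all (fun x => x <= l.+1) s -> tau l (tau l s) = s.
Proof.
move=> /allP h; rewrite /tau map_rev revK -map_comp -[RHS]map_id.
apply/eq_in_map => x /h /= hx; lia.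
Qed.

Lemma inP_all l s : inP l s -> all (fun x => x <= l.+1) s.
Proof.
case/and3P => _ _ /allP h; apply/allP => x /h; lia.
Qed.

Lemma Pl1_inP l s : Pl1 l s -> inP l s.
Proof.
case: l => [|[|l']] //=.
  by move->.
case => [[]//|[nu [[h _] ->]]]; exact: tau_inP.
Qed.

Lemma Pl1_tau l s : Pl1 l s -> Pl1 l (tau l s).
Proof.
case: l => [|[|l']] //=.
  by move->.
case => [h|[nu [h ->]]].
  by right; exists s.
left; rewrite tauK //; exact: inP_all (proj1 h).
Qed.

Lemma absP l (f dep : nat -> nat) : 0 < l ->
 (forall i, 0 < i <= l -> 0 < f i <= l) ->
 (forall i j, 0 < i -> i <= j -> j <= l -> f j <= f i) ->
 (forall i j k, 0 < i -> i <= j -> j <= k -> k <= l -> dep j <= maxn (dep i) (dep k)) ->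
 (forall i, 0 < i <= l -> (f i = i /\ dep i = 0) \/ dep (f i) < dep i) ->
 Pl1 l (map f (iota 1 l)).
Proof.
elim: l f dep => [//|l' IH] f dep _ Ha Hb Hc Hd.
have inPs : inP l'.+1 (map f (iota 1 l'.+1)).
  apply/and3P; split.
  - by rewrite size_map size_iota.
  - apply: sorted_map_iota => i j h1 h2 h3; apply: Hb; lia.
  - apply/allP => x /mapP [i]; rewrite mem_iota => hi ->; apply: Ha; lia.
rewrite /=; case: ifP => [/eqP l0|l0].
  subst l'; have := Ha 1 isT; rewrite /=; case: (f 1) => [|[|]]//.
have lp : 0 < l' by lia.
have [hl|h1] := leqP (dep 1) (dep l'.+1).
-
  have deep : forall j, 0 < j <= l'.+1 -> dep j <= dep l'.+1.
    move=> j hj; have := Hc 1 j l'.+1 isT; lia.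
  left; split => //.
  have E : take l' (map f (iota 1 l'.+1)) = map f (iota 1 l').
    by rewrite -[l'.+1]addn1 iotaD map_cat take_size_cat ?size_map ?size_iota.
  move: E => /= ->.
  apply: (IH f dep) => //.
  + move=> i hi; have h1 := Ha i ltac:(lia).
    have hdi := deep i ltac:(lia).
    case: (Hd i ltac:(lia)) => [[-> _]|hlt]; first lia.
    have : f i != l'.+1 by apply/eqP => e; rewrite e in hlt; lia.
    lia.
  + move=> i j h1 h2 h3; apply: Hb; lia.
  + move=> i j k h1 h2 h3 h4; apply: Hc; lia.
  + move=> i hi; apply: Hd; lia.
- have deep : forall j, 0 < j <= l'.+1 -> dep j <= dep 1.
    move=> j hj; have := Hc 1 j l'.+1 isT; lia.
  right; exists (tau l'.+1 (map f (iota 1 l'.+1))); split; last first.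
    by rewrite tauK // inP_all.
  split; first exact: tau_inP.
  have -> : take l' (tau l'.+1 [seq f i | i <- iota 1 l'.+1]) =
            tau l' (map (fun j => (f j.+1).-1) (iota 1 l')).
    rewrite /tau /= rev_cons -cats1 take_size_cat ?size_rev ?size_map ?size_iota //.
    congr rev; rewrite (_ : iota 2 l' = map (addn 1) (iota 1 l')); last by rewrite -iotaDl.
    rewrite -!map_comp; apply/eq_in_map => j.
    rewrite mem_iota => hj /=; have := Ha (1 + j); rewrite add1n; lia.
  apply: Pl1_tau.
  apply: (IH _ (fun j => dep j.+1)) => //.
  + move=> i hi; have h1' := Ha i.+1 ltac:(lia).
    have hdi := deep i.+1 ltac:(lia).
    have hi' : 0 < i.+1 <= l'.+1 by lia.
    case: (Hd i.+1 hi') => [[-> _]|hlt]; first lia.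
    have : f i.+1 != 1 by apply/eqP => e; rewrite e in hlt; lia.
    lia.
  + move=> i j h2 h3 h4; have := Hb i.+1 j.+1; lia.
  + move=> i j k h2 h3 h4 h5; apply: Hc; lia.
  + move=> i hi; have := Hd i.+1; have := Ha i.+1; case: (f i.+1) => [|x] /=.
      lia.
    lia.
Qed.

Fixpoint ltl (p q : seq nat) : bool :=
  match p, q with
  | x :: p', y :: q' => (x < y) || ((x == y) && ltl p' q')
  | _, _ => false
  end.

Lemma ltl_irr : irreflexive ltl.
Proof. by elim => //= x p ->; rewrite ltnn eqxx. Qed.

Lemma ltl_trans : transitive ltl.
Proof.
move=> q p r; elim: p q r => [|x p IH] [|y q] [|z r] //=.
case/orP => [hxy|/andP[/eqP <- h1]]; case/orP => [hyz|/andP[/eqP <- h2]].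
- by rewrite (ltn_trans hxy hyz).
- by rewrite hxy.
- by rewrite hyz.
- by rewrite eqxx (IH _ _ h1 h2) orbT.
Qed.

Lemma ltl_take d p q : size p = d.+1 -> size q = d.+1 -> ltl p q ->
  (take d p == take d q) || ltl (take d p) (take d q).
Proof.
elim: d p q => [|d IH] [|x p] [|y q] //=.
move=> [hp] [hq] /orP [hxy|/andP[/eqP <- h]].
  by rewrite hxy orbT.
rewrite eqseq_cons eqxx ltnn /=; exact: IH.
Qed.

Lemma size_level d t p : p \in level d t -> size p = d.
Proof.
elim: d t p => [|d IH] [ts] p /=.
  by rewrite inE => /eqP ->.
case/flatten_mapP => i _ /mapP [q /IH hq ->] /=; by rewrite hq.
Qed.

Lemma parent_level d t p : p \in level d.+1 t -> take d p \in level d t.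
Proof.
elim: d t p => [|d IH] [ts] p /=.
  by rewrite take0 inE.
case/flatten_mapP => i hi /mapP [q hq ->] /=.
apply/flatten_mapP; exists i => //; apply/mapP; exists (take d q) => //.
exact: IH.
Qed.

Lemma sorted_level d t : sorted ltl (level d t).
Proof.
elim: d t => [|d IH] [ts] //=.
rewrite (sorted_pairwise ltl_trans).
move: 0 (size ts) => m n; elim: n m => [|n IHn] m //=.
rewrite pairwise_cat IHn andbT pairwise_map.
apply/andP; split.
  apply/allrelP => x y /mapP [p _ ->] /flatten_mapP [j]; rewrite mem_iota => hj.
  by move=> /mapP [q _ ->] /=; rewrite (_ : m < j) //; lia.
rewrite -(sorted_pairwise (leT := relpre (cons m) ltl)) //.
  apply: sub_sorted (IH _) => p q /=; by rewrite ltnn eqxx.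
move=> y x z; exact: ltl_trans.
Qed.

Lemma size_level_S d ts :
  size (level d.+1 (Node ts)) = sumn (map (fun c => size (level d c)) ts).
Proof.
rewrite /= size_flatten /shape -map_comp.
rewrite -{3}(mkseq_nth leaf ts) /mkseq -map_comp.
by congr sumn; apply: eq_map => i /=; rewrite size_map.
Qed.

Lemma count_level N t : nverts t <= N ->
  \sum_(d < N) size (level d t) = nverts t.
Proof.
elim: N t => [|N IH] [ts] /=; first by [].
move=> hN; rewrite big_ord_recl /= add1n; congr S.
under eq_bigr => i _ do rewrite size_level_S sumnE big_map.
rewrite exchange_big /= sumnE big_map.
have H c : nverts c <= N -> \sum_(i < N) size (level (0 + i) c) = nverts c.
  by move=> hc; rewrite -(IH c hc); apply: eq_bigr.
elim: ts hN => [|c ts IHts] /= hN; rewrite ?big_nil ?big_cons //.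
rewrite H ?IHts //; lia.
Qed.

Definition Rv (u v : vtx) : bool :=
  (size v.2 < size u.2) || [&& size u.2 == size v.2, u.1 == v.1 & ltl u.2 v.2].

Lemma Rv_irr : irreflexive Rv.
Proof. by move=> [c p]; rewrite /Rv ltnn ltl_irr !andbF. Qed.

Lemma Rv_trans : transitive Rv.
Proof.
move=> [c2 q] [c1 p] [c3 r]; rewrite /Rv /=.
case/orP => [h1|/and3P[/eqP h1 /eqP h2 h3]]; case/orP => [h4|/and3P[/eqP h4 /eqP h5 h6]].
- by rewrite (ltn_trans h4 h1).
- by rewrite -h4 h1.
- by rewrite h1 h4.
- by rewrite h1 h4 h2 h5 !eqxx (@ltl_trans q p r h3 h6) orbT.
Qed.

Lemma Rv_size u v : Rv u v -> size v.2 <= size u.2.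
Proof. by case/orP => [/ltnW //|/and3P[/eqP -> _ _]]. Qed.

Lemma block_pw (c : bool) d t :
  pairwise Rv (map (pair c) (level d t)) /\ all (fun v : vtx => size v.2 == d) (map (pair c) (level d t)).
Proof.
split.
  rewrite pairwise_map.
  have hall : all (fun p : seq nat => size p == d) (level d t).
    by apply/allP => p /size_level ->.
  have hpw : pairwise ltl (level d t).
    by rewrite -(sorted_pairwise ltl_trans) sorted_level.
  apply: (@sub_in_pairwise _ [pred p : seq nat | size p == d] ltl _ _ _ hall hpw).
  move=> p q /eqP hp /eqP hq h; by rewrite /relpre /Rv /= hp hq ltnn eqxx h eqxx.
apply/allP => v /mapP [p /size_level hp ->] /=; by rewrite hp.
Qed.

Lemma pw_blocks (B : nat -> seq vtx) ds : sorted gtn ds ->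
  (forall d, all (fun v : vtx => size v.2 == d) (B d)) ->
  (forall d, pairwise Rv (B d)) -> pairwise Rv (flatten (map B ds)).
Proof.
move=> + hs hp; elim: ds => [|d ds IH] //= hso.
rewrite pairwise_cat; apply/and3P; split; [|exact: hp|apply: IH; exact: path_sorted hso].
have : all (gtn d) ds.
  by move: hso; rewrite (path_sortedE (leT := gtn)) => [/andP[]//|] x y z /=; lia.
move/allP => hall.
apply/allrelP => u v hu /flatten_mapP [e /hall /= he hv].
move: (allP (hs d) u hu) (allP (hs e) v hv) => /eqP h1 /eqP h2.
by rewrite /Rv h1 h2 he.
Qed.

Section Tree.
Variables (l : nat) (Tm Tp : ptree).
Definition tr (c : bool) := if c then Tp else Tm.
Local Notation lowv := (lowv Tm Tp).
Local Notation highv := (highv Tm Tp).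
Local Notation dbound := (dbound Tm Tp).
Local Notation label := (label l Tm Tp).
Local Notation vertex_of := (vertex_of l Tm Tp).
Local Notation blabel := (blabel Tm Tp).

Lemma mem_lowv v : (v \in lowv) =
  [&& 0 < size v.2 <= dbound, v.1 == odd (size v.2) & v.2 \in level (size v.2) (tr v.1)].
Proof.
apply/idP/idP.
  case/flatten_mapP => d; rewrite mem_rev mem_iota => hd.
  case: ifP => hod /mapP [p hp ->] /=; rewrite (size_level _ _ _ hp) hod hp /= andbT; lia.
case: v => c p /= /and3P [hs /eqP h1 h2]; apply/flatten_mapP; exists (size p).
  rewrite mem_rev mem_iota add1n ltnS; exact: hs.
by rewrite /= -h1; case: c h1 h2 => _ h; apply/mapP; exists p.
Qed.

Lemma mem_highv v : (v \in highv) =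
  [&& 0 < size v.2 <= dbound, v.1 == ~~ odd (size v.2) & v.2 \in level (size v.2) (tr v.1)].
Proof.
apply/idP/idP.
  case/flatten_mapP => d; rewrite mem_rev mem_iota => hd.
  case: ifP => hod /mapP [p hp ->] /=; rewrite (size_level _ _ _ hp) hod hp /= andbT; lia.
case: v => c p /= /and3P [hs /eqP h1 h2]; apply/flatten_mapP; exists (size p).
  by rewrite mem_rev mem_iota add1n ltnS.
case: ifP => ho; move: (ho : odd (size p) = _) => {}ho; rewrite ho /= in h1; subst c;
  by apply/mapP; exists p.
Qed.

Lemma sorted_depths : sorted gtn (depths_down Tm Tp).
Proof. by rewrite rev_sorted; apply: iota_ltn_sorted. Qed.

Lemma sorted_lowv : sorted Rv lowv.
Proof.
rewrite (sorted_pairwise Rv_trans); apply: pw_blocks; first exact: sorted_depths.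
  by move=> d; case: ifP => _; case: (block_pw true d Tp); case: (block_pw false d Tm).
by move=> d; case: ifP => _; case: (block_pw true d Tp); case: (block_pw false d Tm).
Qed.

Lemma sorted_highv : sorted Rv highv.
Proof.
rewrite (sorted_pairwise Rv_trans); apply: pw_blocks; first exact: sorted_depths.
  by move=> d; case: ifP => _; case: (block_pw true d Tp); case: (block_pw false d Tm).
by move=> d; case: ifP => _; case: (block_pw true d Tp); case: (block_pw false d Tm).
Qed.

Lemma uniq_lowv : uniq lowv.
Proof. have := @sorted_uniq _ Rv Rv_trans Rv_irr lowv sorted_lowv. exact. Qed.
Lemma uniq_highv : uniq highv.
Proof. exact: (sorted_uniq Rv_trans Rv_irr (sorted_highv)). Qed.


Lemma sum_iota_level t N : nverts t <= N.+1 ->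
  \sum_(d <- iota 1 N) size (level d t) = nedges t.
Proof.
move=> h; rewrite /nedges -(count_level _ _ h) big_ord_recl /=.
rewrite -(big_mkord xpredT (fun i => size (level i.+1 t))).
have -> : iota 1 N = index_iota 1 N.+1 by rewrite /index_iota subSS subn0.
rewrite big_add1 /=.
by case: t {h} => ts /=.
Qed.

Lemma size_lh : size lowv + size highv = nedges Tm + nedges Tp.
Proof.
have E1 : size lowv = \sum_(d <- depths_down Tm Tp)
   (if odd d then size (level d Tp) else size (level d Tm)).
  rewrite size_flatten /shape -map_comp sumnE big_map; apply: eq_bigr => d _ /=.
  by case: ifP; rewrite size_map.
have E2 : size highv = \sum_(d <- depths_down Tm Tp)
   (if odd d then size (level d Tm) else size (level d Tp)).
  rewrite size_flatten /shape -map_comp sumnE big_map; apply: eq_bigr => d _ /=.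
  by case: ifP; rewrite size_map.
rewrite E1 E2 -big_split /=.
rewrite (eq_bigr (fun d => size (level d Tm) + size (level d Tp))); last first.
  by move=> d _; case: ifP => _ //; rewrite addnC.
rewrite big_split /= /depths_down !big_rev !sum_iota_level //; rewrite /Defs.dbound; lia.
Qed.

End Tree.
Set Implicit Arguments. Unset Strict Implicit.
Definition vtx_eqType : eqType := Datatypes_prod__canonical__eqtype_Equality Datatypes_bool__canonical__eqtype_Equality (Datatypes_list__canonical__eqtype_Equality Datatypes_nat__canonical__eqtype_Equality).
Ltac fixsz := repeat match goal with
 | H : context [@size ?T ?s] |- _ => let T' := eval compute in T in
     tryif constr_eq T T' then fail else change (@size T s) with (@size T' s) in H
 | |- context [@size ?T ?s] => let T' := eval compute in T in
     tryif constr_eq T T' then fail else change (@size T s) with (@size T' s)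
 | H : context [@index ?T ?x ?s] |- _ => lazymatch T with vtx_eqType => fail | _ => change (@index T x s) with (@index vtx_eqType x s) in H end
 | |- context [@index ?T ?x ?s] => lazymatch T with vtx_eqType => fail | _ => change (@index T x s) with (@index vtx_eqType x s) end
 end.
Ltac nlia := fixsz; lia.

Lemma index_Rv (s : seq vtx) x y : sorted Rv s -> x \in s -> y \in s -> Rv x y ->
  index x s < index y s.
Proof.
move=> hs hx hy hxy; rewrite ltnNge; apply/negP => hle.
move: hle; rewrite leq_eqVlt => /orP [/eqP e|hlt].
  have : x = y by rewrite -(nth_index x hx) -e nth_index.
  by move=> exy; move: hxy; rewrite exy Rv_irr.
have := sorted_ltn_nth Rv_trans x hs; move/(_ (index y s) (index x s)).
rewrite !inE !index_mem => /(_ hy hx hlt); rewrite !nth_index // => hyx.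
by move: (Rv_trans _ _ _ hxy hyx); rewrite Rv_irr.
Qed.

Lemma Rv_nth (s : seq vtx) x0 i j : sorted Rv s -> i < j -> j < size s ->
  Rv (nth x0 s i) (nth x0 s j).
Proof.
move=> hs hij hj; have := sorted_ltn_nth Rv_trans x0 hs; move/(_ i j).
rewrite !inE => /(_ _ hj hij); apply; lia.
Qed.

Lemma size_nth_mono (s : seq vtx) x0 i j : sorted Rv s -> i <= j -> j < size s ->
  size (nth x0 s j).2 <= size (nth x0 s i).2.
Proof.
move=> hs; rewrite leq_eqVlt => /orP [/eqP ->//|hij] hj.
exact: (Rv_size _ _ (Rv_nth x0 hs hij hj)).
Qed.

Lemma parent_Rv u v : Rv u v -> 0 < size v.2 ->
  (parent u == parent v) || Rv (parent u) (parent v).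
Proof.
case: u v => [c p] [c' q]; rewrite /Rv /parent /= !size_take_min.
case/orP => [h|/and3P [/eqP e /eqP -> h]] hq.
  apply/orP; right; apply/orP; left; lia.
have : exists d, size p = d.+1 by exists (size p).-1; lia.
case=> d hd; rewrite -e hd /= (_ : minn d d.+1 = d); last lia.
have hq' : size q = d.+1 by lia.
case/orP: (ltl_take d p q hd hq' h) => [/eqP ->|h2].
  by rewrite eqxx.
by rewrite !eqxx ltnn h2 orbT.
Qed.

Section Tree2.
Variables (l : nat) (Tm Tp : ptree).
Local Notation lowv := (lowv Tm Tp).
Local Notation highv := (highv Tm Tp).
Local Notation dbound := (dbound Tm Tp).
Local Notation label := (label l Tm Tp).
Local Notation vertex_of := (vertex_of l Tm Tp).
Local Notation blabel := (blabel Tm Tp).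
Local Notation mu := (mu l Tm Tp).
Hypothesis hl0 : 0 < l.
Hypothesis hcnt : size lowv + size highv = l.-1.

Lemma low_not_high v : v \in lowv -> v \notin highv.
Proof.
rewrite mem_lowv mem_highv => /and3P [_ /eqP -> _]; by case: (odd _); rewrite /= andbF.
Qed.

Lemma low_size v : v \in lowv -> 0 < size v.2.
Proof. by rewrite mem_lowv => /and3P [/andP[]]. Qed.
Lemma high_size v : v \in highv -> 0 < size v.2.
Proof. by rewrite mem_highv => /and3P [/andP[]]. Qed.

Lemma lab_low v : v \in lowv -> label v = (index v lowv).+1.
Proof. by rewrite /Defs.label => ->. Qed.

Lemma lab_high v : v \in highv -> label v = l - index v highv.
Proof.
move=> h; rewrite /Defs.label h; case: ifP => // hlow.
by move: (low_not_high hlow); rewrite h.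
Qed.

Lemma lab_root v : size v.2 = 0 -> label v = blabel.
Proof.
move=> h; rewrite /Defs.label; case: ifP => [/low_size|_]; first by rewrite h.
by case: ifP => [/high_size|_]; first by rewrite h.
Qed.

Lemma vo_low i : 0 < i <= size lowv -> vertex_of i = nth (false, [::]) lowv i.-1.
Proof. by move=> /andP [_ h]; rewrite /Defs.vertex_of h. Qed.

Lemma vo_high i : (size lowv).+1 < i <= l -> vertex_of i = nth (false, [::]) highv (l - i).
Proof. move=> h; rewrite /Defs.vertex_of ifN //; nlia. Qed.

Lemma vo_b : size (vertex_of blabel).2 = 0.
Proof.
rewrite /Defs.vertex_of /Defs.blabel ltnn nth_default //; nlia.
Qed.

Lemma lab_low_range v : v \in lowv -> 0 < label v <= size lowv.
Proof. move=> h; rewrite lab_low //; move: h; rewrite -index_mem; nlia. Qed.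

Lemma lab_high_range v : v \in highv -> (size lowv).+1 < label v <= l.
Proof. move=> h; rewrite lab_high //; move: h; rewrite -index_mem; nlia. Qed.

Lemma vo_label w : w \in lowv -> vertex_of (label w) = w.
Proof.
move=> h; rewrite vo_low ?lab_low_range // lab_low //= nth_index //.
Qed.

Lemma vo_label_h w : w \in highv -> vertex_of (label w) = w.
Proof.
move=> h; rewrite vo_high ?lab_high_range // lab_high //.
have : index w highv < size highv by rewrite index_mem.
move=> hi; rewrite (_ : l - (l - index w highv) = index w highv) ?nth_index //; nlia.
Qed.

Lemma parent_low v : v \in lowv -> (parent v \in highv) || (size (parent v).2 == 0).
Proof.
case: v => c p; rewrite mem_lowv /parent /= => /and3P [hs /eqP hc hp].
have [d hd] : exists d, size p = d.+1 by exists (size p).-1; nlia.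
rewrite hd /= size_take_min; case: d hd hp hs => [|d] hd hp hs; first by rewrite min0n eqxx orbT.
apply/orP; left; rewrite mem_highv.
have hs' : size (take d.+1 p) = d.+1 by rewrite size_takel // hd.
apply/and3P; split => /=; rewrite ?hs'.
- nlia.
- by rewrite hc hd oddS negbK.
- apply: parent_level; move: hp; by rewrite hd.
Qed.

Lemma parent_high v : v \in highv -> (parent v \in lowv) || (size (parent v).2 == 0).
Proof.
case: v => c p; rewrite mem_highv /parent /= => /and3P [hs /eqP hc hp].
have [d hd] : exists d, size p = d.+1 by exists (size p).-1; nlia.
rewrite hd /= size_take_min; case: d hd hp hs => [|d] hd hp hs; first by rewrite min0n eqxx orbT.
apply/orP; left; rewrite mem_lowv.
have hs' : size (take d.+1 p) = d.+1 by rewrite size_takel // hd.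
apply/and3P; split => /=; rewrite ?hs'.
- nlia.
- by rewrite hc hd (oddS d.+1) negbK.
- apply: parent_level; move: hp; by rewrite hd.
Qed.


Lemma b_le : blabel <= l.
Proof. rewrite /Defs.blabel; nlia. Qed.

Lemma lab_range w : [|| w \in lowv, w \in highv | size w.2 == 0] -> 0 < label w <= l.
Proof.
case/or3P => [/lab_low_range|/lab_high_range|/eqP/lab_root ->]; have := b_le;
  rewrite /Defs.blabel; nlia.
Qed.

Lemma v_in i : 0 < i <= l -> i != blabel ->
  (vertex_of i \in lowv /\ i <= size lowv) \/ (vertex_of i \in highv /\ (size lowv).+1 < i).
Proof.
move=> hi hb; have [h|h] := leqP i (size lowv).
  left; split => //; rewrite vo_low; last nlia.
  apply: mem_nth; nlia.
right; have h' : (size lowv).+1 < i by move: hb; rewrite /Defs.blabel; nlia.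
split => //; rewrite vo_high; last nlia.
apply: mem_nth; nlia.
Qed.

Lemma pl_low v : v \in lowv -> blabel <= label (parent v).
Proof.
move/parent_low/orP => [/lab_high_range|/eqP/lab_root ->//]; rewrite /Defs.blabel; nlia.
Qed.

Lemma pl_high v : v \in highv -> label (parent v) <= blabel.
Proof.
move/parent_high/orP => [/lab_low_range|/eqP/lab_root ->//]; rewrite /Defs.blabel; nlia.
Qed.

Lemma G1 x y : (x \in highv) || (size x.2 == 0) -> (y \in highv) || (size y.2 == 0) ->
  (x == y) || Rv x y -> label y <= label x.
Proof.
move=> hx hy /orP [/eqP -> //|hr].
case/orP: hy => [hy|/eqP/lab_root ->].
  have hx' : x \in highv.
    case/orP: hx => // /eqP h0; have := Rv_size _ _ hr; have := high_size hy; rewrite h0 => a b; by move: (leq_trans a b).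
  rewrite !lab_high //; have := index_Rv (sorted_highv Tm Tp) hx' hy hr; nlia.
case/orP: hx => [/lab_high_range|/eqP/lab_root ->//]; rewrite /Defs.blabel; nlia.
Qed.

Lemma G2 x y : (x \in lowv) || (size x.2 == 0) -> (y \in lowv) || (size y.2 == 0) ->
  (x == y) || Rv x y -> label x <= label y.
Proof.
move=> hx hy /orP [/eqP -> //|hr].
case/orP: hy => [hy|/eqP/lab_root ->].
  have hx' : x \in lowv.
    case/orP: hx => // /eqP h0; have := Rv_size _ _ hr; have := low_size hy; rewrite h0 => a b; by move: (leq_trans a b).
  rewrite !lab_low //; have := index_Rv (sorted_lowv Tm Tp) hx' hy hr; nlia.
case/orP: hx => [/lab_low_range|/eqP/lab_root ->//]; rewrite /Defs.blabel; nlia.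
Qed.

Lemma F3 u v : u \in lowv -> v \in lowv -> Rv u v -> label (parent v) <= label (parent u).
Proof.
move=> hu hv hr; apply: G1; [|exact: parent_low|exact: parent_Rv hr (low_size hv)].
exact: parent_low hu.
Qed.

Lemma F4 u v : u \in highv -> v \in highv -> Rv u v -> label (parent u) <= label (parent v).
Proof.
move=> hu hv hr; apply: G2; [|exact: parent_high|exact: parent_Rv hr (high_size hv)].
exact: parent_high hu.
Qed.

Lemma mu_ne i : i != blabel -> mu i = label (parent (vertex_of i)).
Proof. by rewrite /Defs.mu => /negbTE ->. Qed.

Lemma mu_bb : mu blabel = blabel.
Proof. by rewrite /Defs.mu eqxx. Qed.

Lemma condA i : 0 < i <= l -> 0 < mu i <= l.
Proof.
move=> hi; have [->|hb] := eqVneq i blabel.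
  rewrite mu_bb; have := b_le; rewrite /Defs.blabel; nlia.
rewrite mu_ne //; apply: lab_range.
case: (v_in hi hb) => [[h _]|[h _]].
  by case/orP: (parent_low h) => ->; rewrite ?orbT.
by case/orP: (parent_high h) => ->; rewrite ?orbT.
Qed.


Lemma condB i j : 0 < i -> i <= j -> j <= l -> mu j <= mu i.
Proof.
move=> h0 hij hjl.
have [ib|hib] := eqVneq i blabel; have [jb|hjb] := eqVneq j blabel.
- by rewrite ib jb.
- rewrite ib mu_bb mu_ne //.
  case: (@v_in j ltac:(nlia) hjb) => [[_ h]|[h _]].
    by move: hij; rewrite ib /Defs.blabel; nlia.
  exact: pl_high.
- rewrite jb mu_bb mu_ne //.
  case: (@v_in i ltac:(nlia) hib) => [[h _]|[_ h]].
    exact: pl_low.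
  by move: hij; rewrite jb /Defs.blabel; nlia.
- rewrite !mu_ne //.
  case: (@v_in i ltac:(nlia) hib) => [[hi hiL]|[hi hiL]];
  case: (@v_in j ltac:(nlia) hjb) => [[hj hjL]|[hj hjL]].
  + move: hij; rewrite leq_eqVlt => /orP [/eqP -> //|hlt].
    apply: F3 => //; rewrite !vo_low; [|nlia|nlia]; apply: Rv_nth; [exact: sorted_lowv|nlia|nlia].
  + apply: (@leq_trans blabel); [exact: pl_high|exact: pl_low].
  + nlia.
  + move: hij; rewrite leq_eqVlt => /orP [/eqP -> //|hlt].
    apply: F4 => //; rewrite !vo_high; [|nlia|nlia]; apply: Rv_nth; [exact: sorted_highv|nlia|nlia].
Qed.


Lemma condC i j k : 0 < i -> i <= j -> j <= k -> k <= l ->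
  size (vertex_of j).2 <= maxn (size (vertex_of i).2) (size (vertex_of k).2).
Proof.
move=> h0 hij hjk hkl.
have [jb|hjb] := eqVneq j blabel; first by rewrite jb vo_b.
case: (@v_in j ltac:(nlia) hjb) => [[hj hjL]|[hj hjL]].
- apply: (@leq_trans (size (vertex_of i).2)); last exact: leq_maxl.
  rewrite !vo_low; [|nlia|nlia]; apply: size_nth_mono; [exact: sorted_lowv|nlia|nlia].
- apply: (@leq_trans (size (vertex_of k).2)); last exact: leq_maxr.
  rewrite !vo_high; [|nlia|nlia]; apply: size_nth_mono; [exact: sorted_highv|nlia|nlia].
Qed.

Lemma dep_label w : [|| w \in lowv, w \in highv | size w.2 == 0] ->
  size (vertex_of (label w)).2 = size w.2.
Proof.
case/or3P => [h|h|/eqP h].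
- by rewrite vo_label.
- by rewrite vo_label_h.
- by rewrite lab_root // vo_b h.
Qed.

Lemma condD i : 0 < i <= l ->
  (mu i = i /\ size (vertex_of i).2 = 0) \/ size (vertex_of (mu i)).2 < size (vertex_of i).2.
Proof.
move=> hi; have [ib|hib] := eqVneq i blabel.
  by left; rewrite ib mu_bb vo_b.
right; rewrite mu_ne //.
have [hv hpos] : ([|| parent (vertex_of i) \in lowv, parent (vertex_of i) \in highv
        | size (parent (vertex_of i)).2 == 0] /\ 0 < size (vertex_of i).2).
  case: (v_in hi hib) => [[h _]|[h _]].
    split; last exact: low_size h.
    by case/orP: (parent_low h) => ->; rewrite ?orbT.
  split; last exact: high_size h.
  by case/orP: (parent_high h) => ->; rewrite ?orbT.
rewrite dep_label // /parent /= size_take_min.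
move: hpos; case: (size _) => // n _; rewrite /= minnE; nlia.
Qed.

End Tree2.

Theorem lemma4p4 (l : nat) (Tm Tp : ptree) :
  0 < l -> nedges Tm + nedges Tp = l.-1 ->
  sorted geq (mu_seq l Tm Tp) /\ Pl1 l (mu_seq l Tm Tp).
Proof.
move=> hl he.
have hcnt : size (lowv Tm Tp) + size (highv Tm Tp) = l.-1 by rewrite size_lh.
have P : Pl1 l (mu_seq l Tm Tp).
  apply: (absP l (mu l Tm Tp) (fun i => size (vertex_of l Tm Tp i).2)) => //.
  - move=> i hi; exact: condA.
  - move=> i j h1 h2 h3; exact: condB.
  - move=> i j k h1 h2 h3 h4; exact: condC.
  - move=> i hi; exact: condD.
split => //; by case/and3P: (Pl1_inP _ _ P).
Qed.
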